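(* Let $\tau\ge1$ and let $\mathcal C$ be any finite set of candidates. Form the pairwise majority graph on $\mathcal C$ in which, for each pair, the winner is determined by Weighted Majority Rule 1. Then every candidate in the uncovered set of this graph has distortion at most $$\min\Big\{\max\big\{\tfrac{3\tau-1}{\tau+1},\tfrac{\tau+2}{\tau}\big\}+2,\ \max\big\{(\tfrac{3\tau-1}{\tau+1})^2,(\tfrac{\tau+2}{\tau})^2\big\}\Big\}.$$
   Context: Voters $N=\{1,\dots,n\}$ and candidates $\mathcal C$ are points of an arbitrary metric space $(X,d)$. Voter $i$ prefers $P$ to $Q$ only if $d(i,P)\le d(i,Q)$, with preference strength $\alpha_i^{PQ}=d(i,Q)/d(i,P)\ge1$. $SC(Y)=\sum_{i\in N}d(i,Y)$. Distortion of a candidate $P$ is $SC(P)/\min_{Z\in\mathcal C}SC(Z)$. Weighted Majority Rule 1 for a pair $P,Q$: voters whose preference between $P$ and $Q$ has strength $>\tau$ are strong, others weak; if $\tau\ge\sqrt2+1$ strong voters get weight $\frac{\tau+1}{\tau-1}$, weak voters weight $1$; if $\tau<\sqrt2+1$ strong voters get weight $\tau$, weak voters weight $1$; the candidate with larger total weight of supporters wins the pair (ties broken arbitrarily). A candidate $P$ is in the uncovered set of the resulting tournament if for every other candidate $Z$, either $P$ beats $Z$, or there is a candidate $Q$ such that $P$ beats $Q$ and $Q$ beats $Z$. *)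

(* Defs.v *)
From Stdlib Require Import Reals List.
Import ListNotations.
Open Scope R_scope.

Definition is_metric {X : Type} (d : X -> X -> R) : Prop :=
  (forall x y, 0 <= d x y) /\
  (forall x y, d x y = 0 <-> x = y) /\
  (forall x y, d x y = d y x) /\
  (forall x y z, d x z <= d x y + d y z).

Definition sum_voters (n : nat) (f : nat -> R) : R :=
  fold_right Rplus 0 (map f (seq 0 n)).

Definition SC {X : Type} (d : X -> X -> R) (n : nat) (v : nat -> X) (Y : X) : R :=
  sum_voters n (fun i => d (v i) Y).

Definition consistent_prefs {X : Type} (d : X -> X -> R) (n : nat) (v : nat -> X)
  (cands : list X) (pref : nat -> X -> X -> bool) : Prop :=
  forall i, (i < n)%nat ->
    (forall P Q, In P cands -> In Q cands -> P <> Q ->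
       pref i P Q = true \/ pref i Q P = true) /\
    (forall P Q, In P cands -> In Q cands ->
       ~ (pref i P Q = true /\ pref i Q P = true)) /\
    (forall P Q Z, In P cands -> In Q cands -> In Z cands ->
       pref i P Q = true -> pref i Q Z = true -> pref i P Z = true) /\
    (forall P Q, In P cands -> In Q cands ->
       pref i P Q = true -> d (v i) P <= d (v i) Q).

Definition strong_weight (tau : R) : R :=
  if Rle_dec (sqrt 2 + 1) tau then (tau + 1) / (tau - 1) else tau.

(* Voter i (preferring P to Q) is strong iff the strength
   alpha = d(i,Q)/d(i,P) exceeds tau, written multiplicatively
   d(i,Q) > tau * d(i,P) (so d(i,P)=0<d(i,Q) is strong (infinite strength),
   d(i,P)=d(i,Q)=0 is weak (strength 1)). *)
Definition is_strong {X : Type} (d : X -> X -> R) (tau : R) (x P Q : X) : bool :=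
  if Rlt_dec (tau * d x P) (d x Q) then true else false.

Definition WMR1_weight {X : Type} (d : X -> X -> R) (tau : R) (n : nat)
  (v : nat -> X) (pref : nat -> X -> X -> bool) (P Q : X) : R :=
  sum_voters n (fun i =>
    if pref i P Q then
      (if is_strong d tau (v i) P Q then strong_weight tau else 1)
    else 0).

(* beats is a tournament on cands produced by Weighted Majority Rule 1,
   with ties broken arbitrarily. *)
Definition WMR1_tournament {X : Type} (d : X -> X -> R) (tau : R) (n : nat)
  (v : nat -> X) (cands : list X) (pref : nat -> X -> X -> bool)
  (beats : X -> X -> Prop) : Prop :=
  forall P Q, In P cands -> In Q cands -> P <> Q ->
    (beats P Q \/ beats Q P) /\ ~ (beats P Q /\ beats Q P) /\
    (WMR1_weight d tau n v pref Q P < WMR1_weight d tau n v pref P Q -> beats P Q).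

Definition uncovered {X : Type} (cands : list X) (beats : X -> X -> Prop) (P : X) : Prop :=
  In P cands /\
  forall Z, In Z cands -> Z <> P ->
    beats P Z \/ exists Q, In Q cands /\ beats P Q /\ beats Q Z.

Definition distortion_bound (tau : R) : R :=
  Rmin (Rmax ((3 * tau - 1) / (tau + 1)) ((tau + 2) / tau) + 2)
       (Rmax (((3 * tau - 1) / (tau + 1)) ^ 2) (((tau + 2) / tau) ^ 2)).

(* Main.v *)
Require Import Defs.
From Stdlib Require Import Reals List Lra Lia Psatz Classical.
Open Scope R_scope.

Lemma fr_le (l : list nat) (f g : nat -> R) :
  (forall i, In i l -> f i <= g i) ->
  fold_right Rplus 0 (map f l) <= fold_right Rplus 0 (map g l).
Proof.
  induction l as [|a l IH]; simpl; intros H. lra.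
  assert (f a <= g a) by (apply H; auto).
  assert (fold_right Rplus 0 (map f l) <= fold_right Rplus 0 (map g l))
    by (apply IH; intros; apply H; auto).
  lra.
Qed.

Lemma fr_lin (l : list nat) a b (f g : nat -> R) :
  fold_right Rplus 0 (map (fun i => a * f i + b * g i) l) =
  a * fold_right Rplus 0 (map f l) + b * fold_right Rplus 0 (map g l).
Proof. induction l; simpl; [ring | rewrite IHl; ring]. Qed.

Lemma fr_nonneg (l : list nat) (f : nat -> R) :
  (forall i, In i l -> 0 <= f i) -> 0 <= fold_right Rplus 0 (map f l).
Proof.
  induction l as [|a l IH]; simpl; intros H. lra.
  assert (0 <= f a) by (apply H; auto).
  assert (0 <= fold_right Rplus 0 (map f l)) by (apply IH; intros; apply H; auto).
  lra.
Qed.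

Lemma sum_le n (f g : nat -> R) :
  (forall i, (i < n)%nat -> f i <= g i) -> sum_voters n f <= sum_voters n g.
Proof.
  intros H; unfold sum_voters; apply fr_le; intros i Hi.
  apply in_seq in Hi; apply H; lia.
Qed.

Lemma sum_lin n a b (f g : nat -> R) :
  sum_voters n (fun i => a * f i + b * g i) = a * sum_voters n f + b * sum_voters n g.
Proof. unfold sum_voters; apply fr_lin. Qed.

Lemma SC_nonneg {X} (d : X -> X -> R) n v Y : is_metric d -> 0 <= SC d n v Y.
Proof.
  intros [Hd _]. unfold SC, sum_voters. apply fr_nonneg; intros; apply Hd.
Qed.

Lemma cert {X} (d : X -> X -> R) tau n v cands pref P Q (F : nat -> R) K :
  In P cands -> In Q cands -> P <> Q -> consistent_prefs d n v cands pref ->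
  WMR1_weight d tau n v pref Q P <= WMR1_weight d tau n v pref P Q -> 0 <= K ->
  (forall i, (i < n)%nat -> pref i P Q = true ->
     F i <= - (K * (if is_strong d tau (v i) P Q then strong_weight tau else 1))) ->
  (forall i, (i < n)%nat -> pref i Q P = true ->
     F i <= K * (if is_strong d tau (v i) Q P then strong_weight tau else 1)) ->
  sum_voters n F <= 0.
Proof.
  intros HP HQ HPQ Hc HW HK HA HB.
  set (g := fun i => if pref i Q P then (if is_strong d tau (v i) Q P then strong_weight tau else 1) else 0).
  set (h := fun i => if pref i P Q then (if is_strong d tau (v i) P Q then strong_weight tau else 1) else 0).
  assert (HW' : sum_voters n g <= sum_voters n h) by exact HW.
  assert (Hs: sum_voters n F <= sum_voters n (fun i => K * g i + (-K) * h i)).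
  { apply sum_le. intros i Hi. destruct (Hc i Hi) as [Ht [Ha _]]. unfold g, h.
    destruct (pref i P Q) eqn:E1.
    - assert (E2 : pref i Q P = false).
      { destruct (pref i Q P) eqn:E; auto. exfalso; apply (Ha P Q HP HQ); auto. }
      rewrite E2. specialize (HA i Hi E1). lra.
    - destruct (Ht P Q HP HQ HPQ) as [E|E]; [congruence|]. rewrite E.
      specialize (HB i Hi E). lra. }
  rewrite sum_lin in Hs. nra.
Qed.

Lemma regime tau : 1 <= tau ->
  (strong_weight tau = tau /\ tau*tau - 2*tau - 1 < 0) \/
  (strong_weight tau * (tau - 1) = tau + 1 /\ 0 <= tau*tau - 2*tau - 1 /\ 1 < tau).
Proof.
  intros H. unfold strong_weight.
  pose proof (sqrt_pos 2) as H0. pose proof (sqrt_sqrt 2 ltac:(lra)) as H2.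
  assert (1 < sqrt 2) by nra.
  destruct (Rle_dec (sqrt 2 + 1) tau).
  - right. split; [field; lra | split; nra].
  - left. split; [reflexivity | nra].
Qed.
Lemma os_arith tau w f c x y D :
 1 <= tau -> 0 <= x -> 0 <= y -> 0 <= D -> D <= x + y -> y <= x + D -> x <= y + D ->
 tau + 2 <= f*tau -> 0 <= c -> 2*c <= f - 1 -> c*w = 1 ->
 (f < tau -> tau - f <= c*(tau-1)) ->
 (y <= x -> tau*y < x -> y - f*x <= -((c*D)*w)) /\
 (y <= x -> ~ tau*y < x -> y - f*x <= -((c*D)*1)) /\
 (x <= y -> tau*x < y -> y - f*x <= (c*D)*w) /\
 (x <= y -> ~ tau*x < y -> y - f*x <= (c*D)*1).
Proof.
  intros Ht Hx Hy HD H1 H2 H3 Hf2 Hc0 Hc1 Hcw Hc2.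
  assert (Hf : 1 < f) by nra.
  assert (E : c*D*w = D) by (replace (c*D*w) with (D*(c*w)) by ring; rewrite Hcw; ring).
  rewrite E. split; [|split; [|split]].
  - intros Hyx Hs.
    assert (0 <= (f-1)*(x - tau*y)) by (apply Rmult_le_pos; lra).
    assert (0 <= (f*tau - tau - 2)*y) by (apply Rmult_le_pos; lra).
    nra.
  - intros Hyx _.
    assert (0 <= (f-1)*(x+y-D)) by (apply Rmult_le_pos; lra).
    assert (0 <= (f+1)*(x-y)) by (apply Rmult_le_pos; lra).
    assert (0 <= ((f-1) - 2*c)*D) by (apply Rmult_le_pos; lra).
    nra.
  - intros _ _. assert (0 <= (f-1)*x) by (apply Rmult_le_pos; lra). nra.
  - intros Hxy Hw. apply Rnot_lt_le in Hw.
    destruct (Rlt_le_dec f tau) as [Hft|Hft].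
    + specialize (Hc2 Hft).
      assert (0 <= (f-1)*(tau*x - y)) by (apply Rmult_le_pos; lra).
      assert (0 <= (tau-f)*(x + D - y)) by (apply Rmult_le_pos; lra).
      assert (0 <= (c*(tau-1) - (tau - f))*D) by (apply Rmult_le_pos; lra).
      assert (Hm: (tau-1)*(y - f*x) <= (tau-1)*(c*D)) by nra.
      apply Rmult_le_reg_l in Hm; lra.
    + assert (0 <= (f - tau)*x) by (apply Rmult_le_pos; lra).
      assert (0 <= c*D) by (apply Rmult_le_pos; lra). nra.
Qed.

Lemma z_arith tau w K x y z a q :
 1 <= tau -> 1 <= w -> 0 <= x -> 0 <= y -> 0 <= z -> 0<=a -> 0<=q ->
 y <= z + a -> q <= x + z -> a <= y + z -> x <= z + q ->
 0 <= K -> (K <= a - q \/ (a - q <= 0 /\ K = 0)) -> a - q <= w*K -> (a - q <= K \/ (tau-1)*a <= tau*K) ->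
 (tau*y < x -> y <= x -> w*K <= x - y + 2*z) ->
 (y <= x -> tau*y < x -> 1*(1*y + -1*x) + -2*z <= -(K*w)) /\
 (y <= x -> ~ tau*y < x -> 1*(1*y + -1*x) + -2*z <= -(K*1)) /\
 (x <= y -> tau*x < y -> 1*(1*y + -1*x) + -2*z <= K*w) /\
 (x <= y -> ~ tau*x < y -> 1*(1*y + -1*x) + -2*z <= K*1).
Proof.
  intros Ht Hw Hx Hy Hz Ha Hq H1 H2 H3 H4 HK0 HK1 HK2 HK3 HsA.
  split; [|split; [|split]].
  - intros Hyx Hs. specialize (HsA Hs Hyx). lra.
  - intros Hyx _. destruct HK1 as [HK1|[HK1 HK1']]; lra.
  - intros _ _. lra.
  - intros Hxy Hwk. apply Rnot_lt_le in Hwk.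
    destruct HK3 as [HK3|HK3]; [lra|].
    assert (V1 : y - x - 2*z <= a + q - 2*x) by lra.
    assert (V2 : y - x - 2*z <= 2*y - a - q) by lra.
    assert (V3 : y - x - 2*z <= a - q) by lra.
    assert (0 <= tau*((a + q - 2*x) - (y - x - 2*z))) by (apply Rmult_le_pos; lra).
    assert (0 <= (tau-1)*((a - q) - (y - x - 2*z))) by (apply Rmult_le_pos; lra).
    assert (Hm: tau*(y - x - 2*z) <= tau*K) by nra.
    apply Rmult_le_reg_l in Hm; lra.
Qed.
Lemma K_exists tau a q : 1 <= tau -> 0 <= q -> q < a ->
  exists K, 0 <= K /\ K <= a - q /\ a - q <= strong_weight tau * K /\
    (a - q <= K \/ (tau-1)*a <= tau*K) /\
    (forall x y z, 0 <= y -> a <= y + z -> x <= z + q -> tau*y < x -> y <= x ->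
       strong_weight tau * K <= x - y + 2*z).
Proof.
  intros Ht Hq Haq.
  destruct (regime tau Ht) as [[Hw Hr]|[Hw [Hr Ht1]]].
  - rewrite Hw.
    assert (H3t : tau < 3) by nra.
    set (LB := ((3*tau-1)*a - (3-tau)*q)/(tau+1)).
    assert (ELB : LB*(tau+1) = (3*tau-1)*a - (3-tau)*q) by (unfold LB; field; lra).
    assert (HLBu : a - q <= LB).
    { apply (Rmult_le_reg_r (tau+1)); [lra|]. rewrite ELB. nra. }
    assert (HLBa : (tau-1)*a <= LB).
    { apply (Rmult_le_reg_r (tau+1)); [lra|]. rewrite ELB.
      assert (0 <= (3 - tau)*(tau*a - q)) by (apply Rmult_le_pos; nra). nra. }
    assert (HsA : forall x y z, 0 <= y -> a <= y + z -> x <= z + q -> tau*y < x -> y <= x ->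
       LB <= x - y + 2*z).
    { intros x y z Hy H3 H4 Hs Hyx.
      apply (Rmult_le_reg_r (tau+1)); [lra|]. rewrite ELB.
      assert (0 <= (3-tau)*((x - y + 2*z) - (2*x - 2*y + a - q))) by (apply Rmult_le_pos; lra).
      assert (0 <= (2*tau-2)*((x - y + 2*z) - (x - 3*y + 2*a))) by (apply Rmult_le_pos; lra).
      nra. }
    destruct (Rle_dec (a - q) (LB/tau)) as [Hc|Hc].
    + exists (a - q). split; [lra|split;[lra|split;[nra|split;[lra|]]]].
      intros x y z Hy H3 H4 Hs Hyx. specialize (HsA x y z Hy H3 H4 Hs Hyx).
      assert (tau * (a - q) <= LB).
      { apply (Rmult_le_compat_l tau) in Hc; [|lra].
        replace (tau * (LB/tau)) with LB in Hc by (field; lra). lra. }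
      lra.
    + exists (LB/tau).
      assert (E : tau * (LB/tau) = LB) by (field; lra).
      assert (0 <= LB/tau) by (apply Rmult_le_pos; [lra| left; apply Rinv_0_lt_compat; lra]).
      split; [lra|split;[lra|split;[lra|split;[right; lra|]]]].
      intros x y z Hy H3 H4 Hs Hyx. rewrite E. apply HsA; auto.
  - set (w := strong_weight tau) in *.
    assert (Hw1 : 1 <= w) by nra.
    set (K2 := (tau-1)*a/tau).
    assert (EK : tau * K2 = (tau-1)*a) by (unfold K2; field; lra).
    assert (EwK : w*K2*tau = (tau+1)*a).
    { unfold K2. replace (w * ((tau - 1) * a / tau) * tau) with (w*(tau-1)*a) by (field; lra).
      rewrite Hw. ring. }
    assert (HK2 : 0 <= K2) by (unfold K2; apply Rmult_le_pos; [nra| left; apply Rinv_0_lt_compat; lra]).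
    assert (HsA : forall x y z, 0 <= y -> a <= y + z -> x <= z + q -> tau*y < x -> y <= x ->
       w*K2 <= x - y + 2*z).
    { intros x y z Hy H3 H4 Hs Hyx.
      apply (Rmult_le_reg_r tau); [lra|]. rewrite EwK.
      assert (0 <= (tau-1)/2*((x - y + 2*z) - (2*x - 2*y + a - q))) by (apply Rmult_le_pos; lra).
      assert (0 <= (tau+1)/2*((x - y + 2*z) - (x - 3*y + 2*a))) by (apply Rmult_le_pos; lra).
      assert (0 <= (3*tau*tau - 6*tau - 1)/2*y) by (apply Rmult_le_pos; lra).
      assert (0 <= (tau - 1 + (tau+1)/2)*(x - tau*y)) by (apply Rmult_le_pos; lra).
      assert (0 <= (tau-1)/2*(a - q)) by (apply Rmult_le_pos; lra).
      nra. }
    destruct (Rle_dec (a - q) K2) as [Hc|Hc].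
    + exists (a - q). split; [lra|split;[lra|split;[nra|split;[lra|]]]].
      intros x y z Hy H3 H4 Hs Hyx. specialize (HsA x y z Hy H3 H4 Hs Hyx).
      assert (w*(a-q) <= w*K2) by (apply Rmult_le_compat_l; lra). lra.
    + exists K2. split; [lra|split;[lra|split;[|split;[right; lra|]]]].
      * apply (Rmult_le_reg_r tau); [lra|]. rewrite EwK. nra.
      * intros; apply HsA; auto.
Qed.

Lemma tri {X} (d : X -> X -> R) : is_metric d -> forall a b c, d a c <= d b a + d b c.
Proof.
  intros [_ [_ [Hs Ht]]] a b c. rewrite (Hs b a). apply Ht.
Qed.

Lemma tri2 {X} (d : X -> X -> R) : is_metric d -> forall x a b, d x a <= d x b + d a b.
Proof.
  intros [_ [_ [Hs Ht]]] x a b. rewrite (Hs a b). apply Ht.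
Qed.

Lemma beats_W {X} (d : X -> X -> R) tau n v cands pref beats P Q :
  WMR1_tournament d tau n v cands pref beats -> In P cands -> In Q cands -> P <> Q ->
  beats P Q -> WMR1_weight d tau n v pref Q P <= WMR1_weight d tau n v pref P Q.
Proof.
  intros Ht HP HQ HPQ Hb.
  destruct (Ht P Q HP HQ HPQ) as [_ [Hn _]].
  destruct (Ht Q P HQ HP (fun e => HPQ (eq_sym e))) as [_ [_ Hw]].
  apply Rnot_lt_le; intro Hlt. apply Hn; split; auto.
Qed.

Lemma one_step {X} (d : X -> X -> R) tau n v cands pref beats P Q f :
  is_metric d -> 1 <= tau -> consistent_prefs d n v cands pref ->
  WMR1_tournament d tau n v cands pref beats -> In P cands -> In Q cands -> P <> Q ->
  beats P Q -> 3*tau-1 <= f*(tau+1) -> tau+2 <= f*tau ->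
  SC d n v P <= f * SC d n v Q.
Proof.
  intros Hm Ht Hc Htour HP HQ HPQ Hb Hf1 Hf2.
  pose proof (beats_W d tau n v cands pref beats P Q Htour HP HQ HPQ Hb) as HW.
  assert (Hc0: exists c, 0 <= c /\ 2*c <= f - 1 /\ c*strong_weight tau = 1 /\
     (f < tau -> tau - f <= c*(tau-1))).
  { destruct (regime tau Ht) as [[Hw Hr]|[Hw [Hr Ht1]]].
    - exists (/tau). rewrite Hw.
      assert (E: /tau * tau = 1) by (field; lra).
      assert (0 < /tau) by (apply Rinv_0_lt_compat; lra).
      split; [lra|split;[|split;[exact E|]]].
      + apply (Rmult_le_reg_r tau); [lra|]. nra.
      + intros Hft. apply (Rmult_le_reg_r tau); [lra|].
        replace (/tau*(tau-1)*tau) with (tau - 1) by (field; lra). nra.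
    - exists ((tau-1)/(tau+1)).
      assert (E: (tau-1)/(tau+1) * (tau+1) = tau - 1) by (field; lra).
      split; [apply Rmult_le_pos; [lra| left; apply Rinv_0_lt_compat; lra]|split;[|split]].
      + apply (Rmult_le_reg_r (tau+1)); [lra|]. nra.
      + replace ((tau - 1) / (tau + 1) * strong_weight tau) with
          (strong_weight tau * (tau-1) / (tau+1)) by (field; lra).
        rewrite Hw. field; lra.
      + intros Hft. apply (Rmult_le_reg_r (tau+1)); [lra|].
        replace ((tau - 1) / (tau + 1) * (tau - 1) * (tau + 1)) with ((tau-1)*(tau-1))
          by (field; lra). nra. }
  destruct Hc0 as [c [Hc1 [Hc2 [Hc3 Hc4]]]].
  assert (HD : 0 <= d P Q) by (apply Hm).
  pose proof (cert d tau n v cands pref P Q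
     (fun i => 1 * d (v i) P + (-f) * d (v i) Q) (c * d P Q) HP HQ HPQ Hc HW
     ltac:(apply Rmult_le_pos; lra)) as Hs.
  pose proof (sum_lin n 1 (-f) (fun i => d (v i) P) (fun i => d (v i) Q)) as E.
  cbv beta in E.
  assert (Hsum : sum_voters n (fun i => 1 * d (v i) P + (-f) * d (v i) Q) <= 0).
  { apply Hs.
    - intros i Hi Hp. destruct (Hc i Hi) as [_ [_ [_ Hd]]].
      specialize (Hd P Q HP HQ Hp).
      pose proof (tri d Hm P (v i) Q). pose proof (tri2 d Hm (v i) P Q).
      pose proof (tri2 d Hm (v i) Q P). rewrite ((proj1 (proj2 (proj2 Hm))) Q P) in *.
      destruct Hm as [Hn _].
      destruct (os_arith tau (strong_weight tau) f c (d (v i) Q) (d (v i) P) (d P Q)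
        Ht (Hn _ _) (Hn _ _) HD ltac:(lra) ltac:(lra) ltac:(lra) Hf2 Hc1 Hc2 Hc3 Hc4)
        as [A1 [A2 _]].
      unfold is_strong. destruct (Rlt_dec (tau * d (v i) P) (d (v i) Q)).
      + specialize (A1 Hd r). lra.
      + specialize (A2 Hd n0). lra.
    - intros i Hi Hp. destruct (Hc i Hi) as [_ [_ [_ Hd]]].
      specialize (Hd Q P HQ HP Hp).
      pose proof (tri d Hm P (v i) Q). pose proof (tri2 d Hm (v i) P Q).
      pose proof (tri2 d Hm (v i) Q P). rewrite ((proj1 (proj2 (proj2 Hm))) Q P) in *.
      destruct Hm as [Hn _].
      destruct (os_arith tau (strong_weight tau) f c (d (v i) Q) (d (v i) P) (d P Q)
        Ht (Hn _ _) (Hn _ _) HD ltac:(lra) ltac:(lra) ltac:(lra) Hf2 Hc1 Hc2 Hc3 Hc4)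
        as [_ [_ [A3 A4]]].
      unfold is_strong. destruct (Rlt_dec (tau * d (v i) Q) (d (v i) P)).
      + specialize (A3 Hd r). lra.
      + specialize (A4 Hd n0). lra. }
  rewrite E in Hsum. unfold SC. lra.
Qed.

Lemma plus2 {X} (d : X -> X -> R) tau n v cands pref beats P Q Z :
  is_metric d -> 1 <= tau -> consistent_prefs d n v cands pref ->
  WMR1_tournament d tau n v cands pref beats -> In P cands -> In Q cands -> P <> Q ->
  beats P Q -> SC d n v P <= SC d n v Q + 2 * SC d n v Z.
Proof.
  intros Hm Ht Hc Htour HP HQ HPQ Hb.
  pose proof (beats_W d tau n v cands pref beats P Q Htour HP HQ HPQ Hb) as HW.
  assert (Hw1 : 1 <= strong_weight tau).
  { destruct (regime tau Ht) as [[Hw _]|[Hw [_ Ht1]]]; [lra|nra]. }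
  set (a := d P Z). set (q := d Q Z).
  assert (HK : exists K, 0 <= K /\ (K <= a - q \/ (a - q <= 0 /\ K = 0)) /\ a - q <= strong_weight tau * K /\
    (a - q <= K \/ (tau-1)*a <= tau*K) /\
    (forall x y z, 0 <= y -> 0 <= z -> a <= y + z -> x <= z + q -> tau*y < x -> y <= x ->
       strong_weight tau * K <= x - y + 2*z)).
  { destruct (Rlt_le_dec q a) as [Hqa|Hqa].
    - destruct (K_exists tau a q Ht (proj1 Hm _ _) Hqa) as [K [K1 [K2 [K3 [K4 K5]]]]].
      exists K. split; [|split; [left|split;[|split]]]; auto.
    - exists 0. split; [lra|split;[right; lra|split;[nra|split;[left; lra|]]]].
      intros x y z Hy Hz H3 H4 _ Hyx. lra. }
  destruct HK as [K [K1 [K2' [K3 [K4 K5]]]]].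
  pose proof (cert d tau n v cands pref P Q
     (fun i => 1 * (1 * d (v i) P + (-1) * d (v i) Q) + (-2) * d (v i) Z) K
     HP HQ HPQ Hc HW K1) as Hs.
  pose proof (sum_lin n 1 (-1) (fun i => d (v i) P) (fun i => d (v i) Q)) as E1.
  pose proof (sum_lin n 1 (-2) (fun i => 1 * d (v i) P + (-1) * d (v i) Q)
     (fun i => d (v i) Z)) as E2.
  cbv beta in E1, E2.
  assert (Hsum : sum_voters n
     (fun i => 1 * (1 * d (v i) P + (-1) * d (v i) Q) + (-2) * d (v i) Z) <= 0).
  { apply Hs.
    - intros i Hi Hp. destruct (Hc i Hi) as [_ [_ [_ Hd]]].
      specialize (Hd P Q HP HQ Hp).
      destruct (z_arith tau (strong_weight tau) K (d (v i) Q) (d (v i) P) (d (v i) Z) a q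
        Ht Hw1 (proj1 Hm _ _) (proj1 Hm _ _) (proj1 Hm _ _) (proj1 Hm _ _) (proj1 Hm _ _)
        (tri2 d Hm (v i) P Z) (tri d Hm Q (v i) Z) (tri d Hm P (v i) Z) (tri2 d Hm (v i) Q Z)
        K1 K2' K3 K4 (fun Hs Hyx => K5 _ _ _ (proj1 Hm _ _) (proj1 Hm _ _) (tri d Hm P (v i) Z)
            (tri2 d Hm (v i) Q Z) Hs Hyx))
        as [A1 [A2 _]].
      unfold is_strong. destruct (Rlt_dec (tau * d (v i) P) (d (v i) Q)).
      + specialize (A1 Hd r). lra.
      + specialize (A2 Hd n0). lra.
    - intros i Hi Hp. destruct (Hc i Hi) as [_ [_ [_ Hd]]].
      specialize (Hd Q P HQ HP Hp).
      destruct (z_arith tau (strong_weight tau) K (d (v i) Q) (d (v i) P) (d (v i) Z) a q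
        Ht Hw1 (proj1 Hm _ _) (proj1 Hm _ _) (proj1 Hm _ _) (proj1 Hm _ _) (proj1 Hm _ _)
        (tri2 d Hm (v i) P Z) (tri d Hm Q (v i) Z) (tri d Hm P (v i) Z) (tri2 d Hm (v i) Q Z)
        K1 K2' K3 K4 (fun Hs Hyx => K5 _ _ _ (proj1 Hm _ _) (proj1 Hm _ _) (tri d Hm P (v i) Z)
            (tri2 d Hm (v i) Q Z) Hs Hyx))
        as [_ [_ [A3 A4]]].
      unfold is_strong. destruct (Rlt_dec (tau * d (v i) Q) (d (v i) P)).
      + specialize (A3 Hd r). lra.
      + specialize (A4 Hd n0). lra. }
  rewrite E2, E1 in Hsum. unfold SC. lra.
Qed.

Theorem mainTheorem6 (X : Type) (d : X -> X -> R) (n : nat) (v : nat -> X)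
  (cands : list X) (pref : nat -> X -> X -> bool) (beats : X -> X -> Prop)
  (tau : R) (P : X) :
  is_metric d ->
  (0 < n)%nat ->
  cands <> nil -> NoDup cands ->
  1 <= tau ->
  consistent_prefs d n v cands pref ->
  WMR1_tournament d tau n v cands pref beats ->
  uncovered cands beats P ->
  forall Z, In Z cands -> SC d n v P <= distortion_bound tau * SC d n v Z.
Proof.
  intros Hm _ _ _ Ht Hc Htour [HP Hunc] Z HZ.
  set (f1 := (3 * tau - 1) / (tau + 1)). set (f2 := (tau + 2) / tau).
  set (f := Rmax f1 f2).
  assert (E1 : f1 * (tau+1) = 3*tau - 1) by (unfold f1; field; lra).
  assert (E2 : f2 * tau = tau + 2) by (unfold f2; field; lra).
  assert (Hf1 : 3*tau - 1 <= f*(tau+1)).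
  { rewrite <- E1. apply Rmult_le_compat_r; [lra| apply Rmax_l]. }
  assert (Hf2 : tau + 2 <= f*tau).
  { rewrite <- E2. apply Rmult_le_compat_r; [lra| apply Rmax_r]. }
  assert (Hf2' : 1 <= f2) by (apply (Rmult_le_reg_r tau); lra).
  assert (Hf : 1 <= f) by (pose proof (Rmax_r f1 f2); unfold f; lra).
  assert (Hf1' : 0 <= f1) by (apply (Rmult_le_reg_r (tau+1)); lra).
  assert (Hsq : f^2 <= Rmax (f1^2) (f2^2)).
  { unfold f, Rmax at 1. destruct (Rle_dec f1 f2); [apply Rmax_r | apply Rmax_l]. }
  set (M := Rmax (f1^2) (f2^2)) in *.
  assert (HM : 1 <= M) by nra.
  pose proof (SC_nonneg d n v Z Hm) as HSZ.
  pose proof (SC_nonneg d n v P Hm) as HSP.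
  assert (Goal2 : SC d n v P <= (f + 2) * SC d n v Z /\ SC d n v P <= M * SC d n v Z).
  { destruct (classic (Z = P)) as [EZ|NZ].
    - subst Z. split; nra.
    - assert (Direct : beats P Z -> SC d n v P <= (f + 2) * SC d n v Z /\
                                   SC d n v P <= M * SC d n v Z).
      { intros Hb.
        pose proof (one_step d tau n v cands pref beats P Z f Hm Ht Hc Htour HP HZ
          (fun e => NZ (eq_sym e)) Hb Hf1 Hf2).
        split; nra. }
      destruct (Hunc Z HZ NZ) as [Hb|[Q [HQ [HPQ HQZ]]]]; [apply Direct; auto|].
      destruct (classic (Q = P)) as [EQ|NQP]; [subst Q; apply Direct; auto|].
      destruct (classic (Q = Z)) as [EQ|NQZ]; [subst Q; apply Direct; auto|].
      pose proof (one_step d tau n v cands pref beats P Q f Hm Ht Hc Htour HP HQ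
          (fun e => NQP (eq_sym e)) HPQ Hf1 Hf2) as S1.
      pose proof (one_step d tau n v cands pref beats Q Z f Hm Ht Hc Htour HQ HZ
          NQZ HQZ Hf1 Hf2) as S2.
      pose proof (plus2 d tau n v cands pref beats P Q Z Hm Ht Hc Htour HP HQ
          (fun e => NQP (eq_sym e)) HPQ) as S3.
      pose proof (SC_nonneg d n v Q Hm).
      split; nra. }
  unfold distortion_bound. fold f1 f2 f M.
  unfold Rmin. destruct (Rle_dec (f + 2) M); lra.
Qed.
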